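(* Let $l\subset\mathbb{P}^3$ be a fixed line and let $r_t$, $t\in\Delta$, be an analytic family of lines in $\mathbb{P}^3$, where $\Delta\subset\mathbb{C}$ is a disk around $0$, such that $l$ and $r_t$ are skew for $t\neq 0$ and $l$ and $r_0$ meet at a point $p$. Let $m,n$ be positive integers. If $F\in\mathbb{C}[[t]][X,Y,Z,W]$ is the equation of an analytic family of surfaces $F_t$ such that for every $t\in\Delta\setminus\{0\}$, $F_t$ has multiplicity at least $m$ along $l$ and at least $n$ along $r_t$, then $F_0$ has multiplicity at least $m$ along $l$, at least $n$ along $r_0$, and at least $m+n$ at $p$. *)

(* Defs.v *)
From Stdlib Require Import Reals.
Open Scope R_scope.

Definition CC : Type := (R * R)%type.
Definition C0 : CC := (0, 0).
Definition C1 : CC := (1, 0).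
Definition Cadd (x y : CC) : CC := (fst x + fst y, snd x + snd y).
Definition Cmul (x y : CC) : CC :=
  (fst x * fst y - snd x * snd y, fst x * snd y + snd x * fst y).
Fixpoint Cpow (x : CC) (n : nat) : CC :=
  match n with O => C1 | S k => Cmul x (Cpow x k) end.
Definition Cofnat (n : nat) : CC := (INR n, 0).
Definition Cmod (x : CC) : R := sqrt (fst x ^ 2 + snd x ^ 2).
Fixpoint Csum (f : nat -> CC) (n : nat) : CC :=
  match n with O => C0 | S k => Cadd (Csum f k) (f k) end.

Definition analytic_on (rho : R) (f : CC -> CC) : Prop :=
  exists a : nat -> CC, forall t : CC, Cmod t < rho ->
    Un_cv (fun N => fst (Csum (fun k => Cmul (a k) (Cpow t k)) N)) (fst (f t)) /\
    Un_cv (fun N => snd (Csum (fun k => Cmul (a k) (Cpow t k)) N)) (snd (f t)).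

(** * Vectors of CC^4 (homogeneous coordinates X,Y,Z,W of P^3) *)
Record V4 : Type := mkV4 { vX : CC; vY : CC; vZ : CC; vW : CC }.
Definition vzero : V4 := mkV4 C0 C0 C0 C0.
Definition vadd (u v : V4) : V4 :=
  mkV4 (Cadd (vX u) (vX v)) (Cadd (vY u) (vY v)) (Cadd (vZ u) (vZ v)) (Cadd (vW u) (vW v)).
Definition vscale (s : CC) (u : V4) : V4 :=
  mkV4 (Cmul s (vX u)) (Cmul s (vY u)) (Cmul s (vZ u)) (Cmul s (vW u)).

Definition analytic_V4 (rho : R) (a : CC -> V4) : Prop :=
  analytic_on rho (fun t => vX (a t)) /\ analytic_on rho (fun t => vY (a t)) /\
  analytic_on rho (fun t => vZ (a t)) /\ analytic_on rho (fun t => vW (a t)).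

Definition indep2 (u v : V4) : Prop :=
  forall s r : CC, vadd (vscale s u) (vscale r v) = vzero -> s = C0 /\ r = C0.
Definition indep4 (u v w z : V4) : Prop :=
  forall s r q e : CC,
    vadd (vadd (vscale s u) (vscale r v)) (vadd (vscale q w) (vscale e z)) = vzero ->
    s = C0 /\ r = C0 /\ q = C0 /\ e = C0.
Definition span2 (u v x : V4) : Prop :=
  exists s r : CC, x = vadd (vscale s u) (vscale r v).

Definition meet_at (u1 u2 v1 v2 p : V4) : Prop :=
  p <> vzero /\ span2 u1 u2 p /\ span2 v1 v2 p /\
  forall q, span2 u1 u2 q -> span2 v1 v2 q -> exists s : CC, q = vscale s p.

(** * Homogeneous polynomials of degree d in X,Y,Z,W.
    A coefficient function c gives the polynomial
    sum_{i+j+k+l = d} c i j k l X^i Y^j Z^k W^l (other values of c ignored). *)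
Definition coefs : Type := nat -> nat -> nat -> nat -> CC.

Fixpoint ffact (i a : nat) : nat :=
  match a with O => 1%nat | S a' => (ffact i a' * (i - a'))%nat end.

Definition monom (x : V4) (i j k l : nat) : CC :=
  Cmul (Cmul (Cpow (vX x) i) (Cpow (vY x) j)) (Cmul (Cpow (vZ x) k) (Cpow (vW x) l)).

(** value at x of the partial derivative d^a/dX^a d^b/dY^b d^e/dZ^e d^f/dW^f *)
Definition hderiv (d : nat) (c : coefs) (a b e f : nat) (x : V4) : CC :=
  Csum (fun i => Csum (fun j => Csum (fun k => Csum (fun l =>
    if Nat.eqb (i + j + k + l) d then
      Cmul (c i j k l)
        (Cmul (Cofnat (ffact i a * ffact j b * ffact k e * ffact l f))
              (monom x (i - a) (j - b) (k - e) (l - f)))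
    else C0) (S d)) (S d)) (S d)) (S d).

Definition is_nonzero_poly (d : nat) (c : coefs) : Prop :=
  exists i j k l : nat, (i + j + k + l = d)%nat /\ c i j k l <> C0.

Definition mult_ge (d : nat) (c : coefs) (m : nat) (x : V4) : Prop :=
  forall a b e f : nat, (a + b + e + f < m)%nat -> hderiv d c a b e f x = C0.

Definition mult_along (d : nat) (c : coefs) (m : nat) (u v : V4) : Prop :=
  forall x, x <> vzero -> span2 u v x -> mult_ge d c m x.

(* Main.v *)
Require Import Defs.
From Stdlib Require Import Reals Lra Lia Psatz ZArith Classical.
Open Scope R_scope.
Ltac rring := ring.
Ltac rfield := field.

Definition Ccv (u : nat -> CC) (l : CC) : Prop :=
  Un_cv (fun k => fst (u k)) (fst l) /\ Un_cv (fun k => snd (u k)) (snd l).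

Lemma Ccv_const c : Ccv (fun _ => c) c.
Proof.
  split; intros eps Heps; exists 0%nat; intros; unfold R_dist;
  rewrite Rminus_diag, Rabs_R0; exact Heps.
Qed.

Lemma Ccv_add u v a b : Ccv u a -> Ccv v b -> Ccv (fun k => Cadd (u k) (v k)) (Cadd a b).
Proof. intros [H1 H2] [H3 H4]; split; simpl; apply CV_plus; auto. Qed.

Lemma Ccv_mul u v a b : Ccv u a -> Ccv v b -> Ccv (fun k => Cmul (u k) (v k)) (Cmul a b).
Proof.
  intros [H1 H2] [H3 H4]; split; simpl.
  - apply CV_minus; apply CV_mult; auto.
  - apply CV_plus; apply CV_mult; auto.
Qed.

Definition Copp (x : CC) : CC := (- fst x, - snd x).
Lemma Ccv_opp u a : Ccv u a -> Ccv (fun k => Copp (u k)) (Copp a).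
Proof. intros [H1 H2]; split; simpl; apply CV_opp; auto. Qed.

Lemma Un_cv_ev (u v : nat -> R) l N : (forall k, (N <= k)%nat -> u k = v k) -> Un_cv v l -> Un_cv u l.
Proof.
  intros He Hv eps Heps. destruct (Hv eps Heps) as [N1 HN1].
  exists (max N N1); intros k Hk. rewrite He by lia. apply HN1; lia.
Qed.

Lemma Ccv_ev u v l N : (forall k, (N <= k)%nat -> u k = v k) -> Ccv v l -> Ccv u l.
Proof.
  intros He [H1 H2]; split.
  - apply (Un_cv_ev _ (fun k => fst (v k)) _ N); auto. intros k Hk; rewrite He; auto.
  - apply (Un_cv_ev _ (fun k => snd (v k)) _ N); auto. intros k Hk; rewrite He; auto.
Qed.

Lemma CC_ext (x y : CC) : fst x = fst y -> snd x = snd y -> x = y.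
Proof. destruct x, y; simpl; intros; subst; reflexivity. Qed.

Lemma Ccv_unique u a b : Ccv u a -> Ccv u b -> a = b.
Proof.
  intros [H1 H2] [H3 H4]; apply CC_ext; eapply UL_sequence; eauto.
Qed.

Lemma Un_cv_neq0 (u : nat -> R) l : Un_cv u l -> l <> 0 -> exists N, forall k, (N <= k)%nat -> u k <> 0.
Proof.
  intros H Hl. destruct (H (Rabs l)) as [N HN]. { apply Rabs_pos_lt; auto. }
  exists N; intros k Hk Hu. specialize (HN k Hk). unfold R_dist in HN.
  rewrite Hu in HN. replace (0 - l) with (- l) in HN by ring. rewrite Rabs_Ropp in HN. lra.
Qed.

Lemma Ccv_neq0 u l : Ccv u l -> l <> C0 -> exists N, forall k, (N <= k)%nat -> u k <> C0.
Proof.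
  intros [H1 H2] Hl.
  destruct (Req_dec (fst l) 0) as [E1|E1].
  - destruct (Req_dec (snd l) 0) as [E2|E2].
    + exfalso; apply Hl; apply CC_ext; simpl; auto.
    + destruct (Un_cv_neq0 _ _ H2 E2) as [N HN]; exists N; intros k Hk Hu;
      apply (HN k Hk); rewrite Hu; reflexivity.
  - destruct (Un_cv_neq0 _ _ H1 E1) as [N HN]; exists N; intros k Hk Hu;
    apply (HN k Hk); rewrite Hu; reflexivity.
Qed.

Definition sq (c : R) (k : nat) : R := c / (INR k + 2).

Lemma sq_pos c k : 0 < c -> 0 < sq c k.
Proof. intros; unfold sq; apply Rdiv_lt_0_compat; auto. pose proof (pos_INR k); lra. Qed.

Lemma sq_lt c k : 0 < c -> sq c k < c.
Proof.
  intros; unfold sq. pose proof (pos_INR k).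
  apply (Rmult_lt_reg_r (INR k + 2)); [lra|]. unfold Rdiv. rewrite Rmult_assoc, Rinv_l by lra. nra.
Qed.

Lemma sq_cv c : Un_cv (sq c) 0.
Proof.
  intros eps Heps. destruct (archimed (Rabs c / eps)) as [H1 _].
  assert (Hup : (0 <= up (Rabs c / eps))%Z).
  { apply le_IZR. assert (0 <= Rabs c / eps). { unfold Rdiv; apply Rmult_le_pos; [apply Rabs_pos|left; apply Rinv_0_lt_compat; lra]. } lra. }
  exists (Z.to_nat (up (Rabs c / eps))). intros k Hk. unfold R_dist, sq.
  rewrite Rminus_0_r. apply le_INR in Hk. rewrite INR_IZR_INZ, Z2Nat.id in Hk by auto.
  pose proof (pos_INR k).
  unfold Rdiv; rewrite Rabs_mult, (Rabs_right (/ (INR k + 2))) by (left; apply Rinv_0_lt_compat; lra).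
  apply (Rmult_lt_reg_r (INR k + 2)); [lra|]. unfold Rdiv. rewrite Rmult_assoc, Rinv_l by lra.
  rewrite Rmult_1_r.
  assert (Rabs c < eps * (INR k + 2)).
  { apply (Rmult_lt_reg_r (/ eps)). apply Rinv_0_lt_compat; auto.
    replace (eps * (INR k + 2) * / eps) with (INR k + 2) by (field; lra).
    unfold Rdiv in H1. lra. }
  lra.
Qed.

Definition tseq (c : R) (k : nat) : CC := (sq c k, 0).

Lemma tt_cv c : Ccv (tseq c) C0.
Proof. split; simpl. apply sq_cv. exact (proj2 (Ccv_const C0)). Qed.

Lemma tt_neq0 c k : 0 < c -> tseq c k <> C0.
Proof. intros Hc H. injection H; intros. pose proof (sq_pos c k Hc). lra. Qed.

Lemma tt_mod c k : 0 < c -> Cmod (tseq c k) < c.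
Proof.
  intros Hc. unfold Cmod, tseq; cbn [fst snd]. replace (sq c k ^ 2 + 0 ^ 2) with (sq c k ^ 2) by ring.
  rewrite sqrt_pow2. apply sq_lt; auto. left; apply sq_pos; auto.
Qed.
Fixpoint rs (g : nat -> R) (N : nat) : R :=
  match N with O => 0 | S k => rs g k + g k end.

Lemma fst_Csum g N : fst (Csum g N) = rs (fun k => fst (g k)) N.
Proof. induction N; simpl; auto. rewrite IHN; auto. Qed.
Lemma snd_Csum g N : snd (Csum g N) = rs (fun k => snd (g k)) N.
Proof. induction N; simpl; auto. rewrite IHN; auto. Qed.

Lemma rs_ext g h N : (forall k, g k = h k) -> rs g N = rs h N.
Proof. intros H; induction N; simpl; auto. rewrite IHN, H; auto. Qed.

Lemma Cpow_real r k : Cpow (r, 0) k = (r ^ k, 0).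
Proof. induction k; simpl. reflexivity. rewrite IHk. apply CC_ext; simpl; ring. Qed.

Lemma Un_cv_ext (u v : nat -> R) l : (forall k, u k = v k) -> Un_cv v l -> Un_cv u l.
Proof. intros H; apply (Un_cv_ev u v l 0); auto. Qed.

Lemma Un_cv_S (u : nat -> R) l : Un_cv u l -> Un_cv (fun k => u (S k)) l.
Proof.
  intros H. apply (Un_cv_ext _ (fun n => u (n + 1)%nat)). intros; f_equal; lia.
  apply CV_shift'; auto.
Qed.

Lemma cv_bounded (u : nat -> R) l : Un_cv u l -> exists M, forall k, Rabs (u k) <= M.
Proof.
  intros H. assert (Hc : Cauchy_crit (fun k => Rabs (u k))).
  { apply CV_Cauchy. exists (Rabs l). apply cv_cvabs; auto. }
  destruct (cauchy_bound _ Hc) as [M HM]. exists M. intros k. apply HM. exists k; auto.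
Qed.

Lemma pser_cont (alpha : nat -> R) (h : R -> R) (rho : R) : 0 < rho ->
  (forall r, 0 <= r < rho -> Un_cv (rs (fun k => alpha k * r ^ k)) (h r)) ->
  forall rseq : nat -> R, (forall j, 0 <= rseq j < rho) -> Un_cv rseq 0 ->
  Un_cv (fun j => h (rseq j)) (h 0).
Proof.
  intros Hrho Hser rseq Hr Hcv.
  set (r0 := rho / 2).
  assert (Hr0 : 0 < r0) by (unfold r0; lra).
  set (g := fun k => alpha k * r0 ^ k).
  assert (Hg : Un_cv g 0).
  { assert (H1 := Hser r0 ltac:(unfold r0; lra)).
    apply (Un_cv_ext _ (fun k => rs (fun k => alpha k * r0 ^ k) (S k) - rs (fun k => alpha k * r0 ^ k) k)).
    { intros k; simpl; unfold g; ring. }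
    replace 0 with (h r0 - h r0) by ring. apply CV_minus; auto. apply Un_cv_S; auto. }
  destruct (cv_bounded _ _ Hg) as [M HM].
  assert (HM0 : 0 <= M) by (specialize (HM 0%nat); pose proof (Rabs_pos (g 0%nat)); lra).
  assert (Hh0 : h 0 = alpha 0%nat).
  { assert (H0 := Hser 0 ltac:(lra)).
    assert (Hc : Un_cv (rs (fun k => alpha k * 0 ^ k)) (alpha 0%nat)).
    { apply (Un_cv_ev _ (fun _ => alpha 0%nat) _ 1).
      - intros k Hk. destruct k; [lia|]. clear Hk. induction k; simpl. ring.
        simpl in IHk. rewrite IHk. ring.
      - intros eps Heps; exists 0%nat; intros; unfold R_dist; rewrite Rminus_diag, Rabs_R0; lra. }
    eapply UL_sequence; eauto. }
  assert (Hb : forall r, 0 <= r <= r0 / 2 -> Rabs (h r - alpha 0%nat) <= 2 * M * (r / r0)).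
  { intros r Hrr. set (q := r / r0).
    assert (Hq : 0 <= q <= 1/2).
    { unfold q; split. unfold Rdiv; apply Rmult_le_pos; [lra|left; apply Rinv_0_lt_compat; lra].
      apply (Rmult_le_reg_r r0); auto. unfold Rdiv; rewrite Rmult_assoc, Rinv_l by lra. lra. }
    assert (Hterm : forall k, Rabs (alpha k * r ^ k) <= M * q ^ k).
    { intros k. replace (alpha k * r ^ k) with (g k * q ^ k).
      2:{ unfold g, q. rewrite Rmult_assoc, <- Rpow_mult_distr.
          replace (r0 * (r / r0)) with r by (field; lra). reflexivity. }
      rewrite Rabs_mult, (Rabs_right (q ^ k)) by (apply Rle_ge, pow_le; lra).
      apply Rmult_le_compat_r. apply pow_le; lra. apply HM. }
    assert (HN : forall N, Rabs (rs (fun k => alpha k * r ^ k) (S N) - alpha 0%nat) <= 2 * M * q * (1 - q ^ N)).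
    { induction N.
      - simpl. replace (0 + alpha 0%nat * 1 - alpha 0%nat) with 0 by ring. rewrite Rabs_R0. lra.
      - replace (rs (fun k => alpha k * r ^ k) (S (S N)) - alpha 0%nat) with
          ((rs (fun k => alpha k * r ^ k) (S N) - alpha 0%nat) + alpha (S N) * r ^ (S N)) by (simpl; ring).
        eapply Rle_trans; [apply Rabs_triang|].
        specialize (Hterm (S N)). change (q ^ S N) with (q * q ^ N) in *.
        assert (0 <= q ^ N) by (apply pow_le; lra).
        assert (0 <= M * q * q ^ N) by (apply Rmult_le_pos; [apply Rmult_le_pos|]; lra).
        nra. }
    assert (Hlim : Un_cv (fun N => Rabs (rs (fun k => alpha k * r ^ k) (S N) - alpha 0%nat)) (Rabs (h r - alpha 0%nat))).
    { apply cv_cvabs. apply CV_minus. apply Un_cv_S. apply Hser. unfold r0 in Hrr; lra.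
      intros eps Heps; exists 0%nat; intros; unfold R_dist; rewrite Rminus_diag, Rabs_R0; lra. }
    assert (HN' : forall N, Rabs (rs (fun k => alpha k * r ^ k) (S N) - alpha 0%nat) <= 2 * M * q).
    { intros N. eapply Rle_trans; [apply HN|]. assert (0 <= q ^ N) by (apply pow_le; lra).
      assert (0 <= M * q) by (apply Rmult_le_pos; lra). nra. }
    apply (Rle_cv_lim (Vn := fun _ => 2 * M * q) HN' Hlim).
    intros eps Heps; exists 0%nat; intros; unfold R_dist; rewrite Rminus_diag, Rabs_R0; lra. }
  rewrite Hh0. intros eps Heps.
  set (delta := Rmin (r0 / 2) (eps * r0 / (2 * M + 1))).
  assert (Hd : 0 < delta).
  { unfold delta; apply Rmin_pos; [lra|]. unfold Rdiv; apply Rmult_lt_0_compat; [nra|apply Rinv_0_lt_compat; lra]. }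
  destruct (Hcv delta Hd) as [N HN]. exists N. intros j Hj. specialize (HN j Hj).
  unfold R_dist in *. rewrite Rminus_0_r in HN. rewrite Rabs_right in HN by (apply Rle_ge; apply Hr).
  assert (Hj1 : rseq j <= r0 / 2) by (unfold delta in HN; pose proof (Rmin_l (r0/2) (eps * r0 / (2 * M + 1))); lra).
  assert (Hj2 : rseq j <= eps * r0 / (2 * M + 1)) by (unfold delta in HN; pose proof (Rmin_r (r0/2) (eps * r0 / (2 * M + 1))); lra).
  eapply Rle_lt_trans. apply Hb. split; [apply Hr|auto].
  assert (rseq j / r0 <= eps / (2 * M + 1)).
  { apply (Rmult_le_reg_r r0); auto. unfold Rdiv in *. rewrite Rmult_assoc, Rinv_l by lra.
    replace (eps * / (2 * M + 1) * r0) with (eps * r0 * / (2 * M + 1)) by ring. lra. }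
  assert (2 * M * (eps / (2 * M + 1)) < eps).
  { apply (Rmult_lt_reg_r (2 * M + 1)); [lra|]. unfold Rdiv.
    replace (2 * M * (eps * / (2 * M + 1)) * (2 * M + 1)) with (2 * M * eps) by (field; lra). nra. }
  nra.
Qed.

Lemma analytic_cv rho f : 0 < rho -> analytic_on rho f -> Ccv (fun j => f (tseq rho j)) (f C0).
Proof.
  intros Hrho [a Ha].
  assert (Hmod : forall r, 0 <= r < rho -> Cmod (r, 0) < rho).
  { intros r Hr. unfold Cmod; cbn [fst snd]. replace (r ^ 2 + 0 ^ 2) with (r ^ 2) by ring.
    rewrite sqrt_pow2; lra. }
  assert (Hsq : forall j, 0 <= sq rho j < rho).
  { intros j; split; [left; apply sq_pos; auto | apply sq_lt; auto]. }
  split.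
  - apply (pser_cont (fun k => fst (a k)) (fun r => fst (f (r, 0))) rho Hrho); auto.
    + intros r Hr. destruct (Ha (r, 0) (Hmod r Hr)) as [H1 _].
      apply (Un_cv_ext _ (fun N => fst (Csum (fun k => Cmul (a k) (Cpow (r, 0) k)) N))); auto.
      intros N; rewrite fst_Csum. apply rs_ext. intros k. rewrite Cpow_real. simpl. ring.
    + apply sq_cv.
  - apply (pser_cont (fun k => snd (a k)) (fun r => snd (f (r, 0))) rho Hrho); auto.
    + intros r Hr. destruct (Ha (r, 0) (Hmod r Hr)) as [_ H1].
      apply (Un_cv_ext _ (fun N => snd (Csum (fun k => Cmul (a k) (Cpow (r, 0) k)) N))); auto.
      intros N; rewrite snd_Csum. apply rs_ext. intros k. rewrite Cpow_real. simpl. ring.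
    + apply sq_cv.
Qed.

Lemma Cmod_C0 : Cmod C0 = 0.
Proof. unfold Cmod; cbn [fst snd C0]. replace (0 ^ 2 + 0 ^ 2) with 0 by ring. apply sqrt_0. Qed.

Lemma Cadd_assoc x y z : Cadd x (Cadd y z) = Cadd (Cadd x y) z.
Proof. apply CC_ext; simpl; ring. Qed.
Lemma Cadd_comm x y : Cadd x y = Cadd y x.
Proof. apply CC_ext; simpl; ring. Qed.
Lemma Cadd_0l x : Cadd C0 x = x.
Proof. apply CC_ext; simpl; ring. Qed.
Lemma Cadd_Nl x : Cadd (Copp x) x = C0.
Proof. apply CC_ext; simpl; ring. Qed.
Lemma Cmul_assoc x y z : Cmul x (Cmul y z) = Cmul (Cmul x y) z.
Proof. apply CC_ext; simpl; ring. Qed.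
Lemma Cmul_comm x y : Cmul x y = Cmul y x.
Proof. apply CC_ext; simpl; ring. Qed.
Lemma Cmul_1l x : Cmul Defs.C1 x = x.
Proof. apply CC_ext; simpl; ring. Qed.
Lemma Cmul_Dl x y z : Cmul (Cadd x y) z = Cadd (Cmul x z) (Cmul y z).
Proof. apply CC_ext; simpl; ring. Qed.
Lemma CC1_neq0' : Defs.C1 <> C0.
Proof. intros H; injection H; lra. Qed.
Definition Cinv (x : CC) : CC :=
  (fst x / (fst x ^ 2 + snd x ^ 2), - snd x / (fst x ^ 2 + snd x ^ 2)).
Lemma Cinv_l (x : CC) : x <> C0 -> Cmul (Cinv x) x = Defs.C1.
Proof.
  intros Hx. assert (Hn : fst x ^ 2 + snd x ^ 2 <> 0).
  { intro H. apply Hx. destruct x as [a b]; simpl in H.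
    assert (a = 0) by nra. assert (b = 0) by nra. subst; reflexivity. }
  apply CC_ext; simpl; field; replace (fst x * fst x + snd x * snd x) with (fst x ^ 2 + snd x ^ 2) by ring; exact Hn.
Qed.
Lemma Cinv0 : Cinv C0 = C0.
Proof. apply CC_ext; simpl; unfold Rdiv; ring. Qed.

Lemma Cofnat_S n : Cofnat (S n) = Cadd Defs.C1 (Cofnat n).
Proof. unfold Cofnat; apply CC_ext; cbn [fst snd Cadd Defs.C1]; [rewrite S_INR|]; ring. Qed.


Module Aux.
From HB Require Import structures.
From mathcomp Require Import all_boot all_algebra.
From mathcomp Require Import Rstruct ring.
Set Implicit Arguments. Unset Strict Implicit. Unset Printing Implicit Defensive.
Import GRing.Theory.
Local Open Scope ring_scope.

HB.instance Definition _ := Choice.on CC.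
HB.instance Definition _ := GRing.isZmodule.Build CC Cadd_assoc Cadd_comm Cadd_0l Cadd_Nl.
Lemma CC1_neq0 : Defs.C1 != C0. Proof. by apply/eqP; apply CC1_neq0'. Qed.
HB.instance Definition _ := GRing.Zmodule_isComNzRing.Build CC Cmul_assoc Cmul_comm Cmul_1l Cmul_Dl CC1_neq0.
Lemma Cinv_l' (x : CC) : x != 0 -> Cinv x * x = 1.
Proof. by move/eqP; apply Cinv_l. Qed.
HB.instance Definition _ := GRing.ComNzRing_isField.Build CC Cinv_l' Cinv0.

Lemma CaddE (x y : CC) : Cadd x y = x + y. Proof. by []. Qed.
Lemma CmulE (x y : CC) : Cmul x y = x * y. Proof. by []. Qed.
Lemma CoppE (x : CC) : Copp x = - x. Proof. by []. Qed.
Lemma C0E : C0 = 0 :> CC. Proof. by []. Qed.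
Lemma C1E : Defs.C1 = 1 :> CC. Proof. by []. Qed.
Lemma CpowE (x : CC) n : Cpow x n = x ^+ n.
Proof. elim: n => [|n IH] //=. by rewrite IH exprS. Qed.
Lemma CofnatE n : Cofnat n = n%:R :> CC.
Proof.
  elim: n => [|n IH]. by apply: CC_ext.
  by rewrite Cofnat_S IH CaddE C1E mulrS.
Qed.
Lemma CsumE f n : Csum f n = \sum_(i < n) f i.
Proof. elim: n => [|n IH] /=. by rewrite big_ord0. by rewrite big_ord_recr /= IH. Qed.

Arguments Cadd : simpl never.
Arguments Cmul : simpl never.

Lemma Ccv_addR u v a b : Ccv u a -> Ccv v b -> Ccv (fun k => u k + v k) (a + b).
Proof. exact: Ccv_add. Qed.
Lemma Ccv_mulR u v a b : Ccv u a -> Ccv v b -> Ccv (fun k => u k * v k) (a * b).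
Proof. exact: Ccv_mul. Qed.
Lemma Ccv_oppR u a : Ccv u a -> Ccv (fun k => - u k) (- a).
Proof. exact: Ccv_opp. Qed.
Lemma Ccv_subR u v a b : Ccv u a -> Ccv v b -> Ccv (fun k => u k - v k) (a - b).
Proof. move=> H1 H2; apply: Ccv_addR => //; exact: Ccv_oppR. Qed.
Lemma Ccv_cst (c : CC) : Ccv (fun _ => c) c.
Proof. exact: Ccv_const. Qed.
Lemma Ccv_exp u a n : Ccv u a -> Ccv (fun k => u k ^+ n) (a ^+ n).
Proof.
  move=> H; elim: n => [|n IH]. exact: Ccv_cst.
  apply: (Ccv_ev _ (fun k => u k * u k ^+ n) _ 0) => [k _|]; first by rewrite exprS.
  rewrite exprS. exact: Ccv_mulR.
Qed.
Lemma Ccv_natmul u a n : Ccv u a -> Ccv (fun k => u k *+ n) (a *+ n).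
Proof.
  move=> H; elim: n => [|n IH]. exact: Ccv_cst.
  apply: (Ccv_ev _ (fun k => u k + u k *+ n) _ 0) => [k _|]; first by rewrite mulrS.
  rewrite mulrS. exact: Ccv_addR.
Qed.
Lemma Ccv_sum n (F : nat -> 'I_n -> CC) (L : 'I_n -> CC) :
  (forall i, Ccv (fun k => F k i) (L i)) -> Ccv (fun k => \sum_(i < n) F k i) (\sum_(i < n) L i).
Proof.
  elim: n F L => [|n IH] F L H.
    apply: (Ccv_ev _ (fun k => 0) _ 0) => [k _|]; first by rewrite big_ord0.
    rewrite big_ord0. exact: Ccv_cst.
  apply: (Ccv_ev _ (fun k => \sum_(i < n) F k (widen_ord (leqnSn n) i) + F k ord_max) _ 0) => [k _|].
    by rewrite big_ord_recr.
  rewrite big_ord_recr.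
  apply: Ccv_addR; last exact: H. exact: IH.
Qed.
Lemma Ccv_if (b : bool) u v a c : Ccv u a -> Ccv v c -> Ccv (fun k => if b then u k else v k) (if b then a else c).
Proof. by case: b. Qed.

Lemma V4_ext (u v : V4) : vX u = vX v -> vY u = vY v -> vZ u = vZ v -> vW u = vW v -> u = v.
Proof. by case: u => ????; case: v => ???? /= -> -> -> ->. Qed.

Lemma vaddX u v : vX (vadd u v) = vX u + vX v. Proof. by []. Qed.
Lemma vaddY u v : vY (vadd u v) = vY u + vY v. Proof. by []. Qed.
Lemma vaddZ u v : vZ (vadd u v) = vZ u + vZ v. Proof. by []. Qed.
Lemma vaddW u v : vW (vadd u v) = vW u + vW v. Proof. by []. Qed.
Lemma vscaleX s u : vX (vscale s u) = s * vX u. Proof. by []. Qed.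
Lemma vscaleY s u : vY (vscale s u) = s * vY u. Proof. by []. Qed.
Lemma vscaleZ s u : vZ (vscale s u) = s * vZ u. Proof. by []. Qed.
Lemma vscaleW s u : vW (vscale s u) = s * vW u. Proof. by []. Qed.
Lemma vzeroX : vX vzero = 0. Proof. by []. Qed.
Lemma vzeroY : vY vzero = 0. Proof. by []. Qed.
Lemma vzeroZ : vZ vzero = 0. Proof. by []. Qed.
Lemma vzeroW : vW vzero = 0. Proof. by []. Qed.
Definition vE := (vaddX, vaddY, vaddZ, vaddW, vscaleX, vscaleY, vscaleZ, vscaleW,
  vzeroX, vzeroY, vzeroZ, vzeroW).

Ltac vext := apply: V4_ext; rewrite ?vE.

Definition Vcv (xs : nat -> V4) (x : V4) : Prop :=
  [/\ Ccv (fun k => vX (xs k)) (vX x), Ccv (fun k => vY (xs k)) (vY x),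
      Ccv (fun k => vZ (xs k)) (vZ x) & Ccv (fun k => vW (xs k)) (vW x)].

Lemma Vcv_add xs ys x y : Vcv xs x -> Vcv ys y -> Vcv (fun k => vadd (xs k) (ys k)) (vadd x y).
Proof. by case=> ????; case=> ????; split; apply: Ccv_addR. Qed.
Lemma Vcv_scale ss xs s x : Ccv ss s -> Vcv xs x -> Vcv (fun k => vscale (ss k) (xs k)) (vscale s x).
Proof. by move=> H; case=> ????; split; apply: Ccv_mulR. Qed.
Lemma Vcv_cst x : Vcv (fun _ => x) x.
Proof. by split; apply: Ccv_cst. Qed.
Lemma Vcv_ev xs ys x N : (forall k, le N k -> xs k = ys k) -> Vcv ys x -> Vcv xs x.
Proof.
  move=> H [H1 H2 H3 H4]; split.
  - by apply: (Ccv_ev _ (fun k => vX (ys k)) _ N) => // k Hk; rewrite H.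
  - by apply: (Ccv_ev _ (fun k => vY (ys k)) _ N) => // k Hk; rewrite H.
  - by apply: (Ccv_ev _ (fun k => vZ (ys k)) _ N) => // k Hk; rewrite H.
  - by apply: (Ccv_ev _ (fun k => vW (ys k)) _ N) => // k Hk; rewrite H.
Qed.

Lemma Vcv_neq0 xs x : Vcv xs x -> x <> vzero -> exists N, forall k, le N k -> xs k <> vzero.
Proof.
  case=> H1 H2 H3 H4 Hx.
  have [E1|E1] := eqVneq (vX x) 0; last first.
    have [N HN] := Ccv_neq0 _ _ H1 (elimN eqP E1). exists N => k Hk E; apply: (HN k Hk); by rewrite E.
  have [E2|E2] := eqVneq (vY x) 0; last first.
    have [N HN] := Ccv_neq0 _ _ H2 (elimN eqP E2). exists N => k Hk E; apply: (HN k Hk); by rewrite E.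
  have [E3|E3] := eqVneq (vZ x) 0; last first.
    have [N HN] := Ccv_neq0 _ _ H3 (elimN eqP E3). exists N => k Hk E; apply: (HN k Hk); by rewrite E.
  have [E4|E4] := eqVneq (vW x) 0; last first.
    have [N HN] := Ccv_neq0 _ _ H4 (elimN eqP E4). exists N => k Hk E; apply: (HN k Hk); by rewrite E.
  exfalso; apply: Hx; vext => //.
Qed.

Definition det3 (a1 a2 a3 b1 b2 b3 c1 c2 c3 : CC) : CC :=
  a1 * (b2 * c3 - b3 * c2) - a2 * (b1 * c3 - b3 * c1) + a3 * (b1 * c2 - b2 * c1).
Definition det4 (u v w z : V4) : CC :=
  vX u * det3 (vY v) (vZ v) (vW v) (vY w) (vZ w) (vW w) (vY z) (vZ z) (vW z)
  - vY u * det3 (vX v) (vZ v) (vW v) (vX w) (vZ w) (vW w) (vX z) (vZ z) (vW z)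
  + vZ u * det3 (vX v) (vY v) (vW v) (vX w) (vY w) (vW w) (vX z) (vY z) (vW z)
  - vW u * det3 (vX v) (vY v) (vZ v) (vX w) (vY w) (vZ w) (vX z) (vY z) (vZ z).

Lemma cramer u v w z x :
  vscale (det4 u v w z) x =
  vadd (vadd (vscale (det4 x v w z) u) (vscale (det4 u x w z) v))
       (vadd (vscale (det4 u v x z) w) (vscale (det4 u v w x) z)).
Proof.
  case: u => u1 u2 u3 u4; case: v => v1 v2 v3 v4; case: w => w1 w2 w3 w4;
  case: z => z1 z2 z3 z4; case: x => x1 x2 x3 x4.
  rewrite /det4 /det3; vext => /=; ring.
Qed.

Definition S4 (N : nat) (F : nat -> nat -> nat -> nat -> CC) : CC :=
  \sum_(i < N) \sum_(j < N) \sum_(k < N) \sum_(l < N) F i j k l.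

Lemma S4P N F : S4 N F =
  \sum_(r : ('I_N * 'I_N) * ('I_N * 'I_N)) F r.1.1 r.1.2 r.2.1 r.2.2.
Proof.
  rewrite /S4 pair_bigA. under eq_bigr => p _ do rewrite pair_bigA.
  by rewrite pair_bigA.
Qed.

Lemma S4_ext N F G : (forall i j k l, (i < N)%N -> (j < N)%N -> (k < N)%N -> (l < N)%N ->
  F i j k l = G i j k l) -> S4 N F = S4 N G.
Proof.
  move=> H; rewrite /S4; apply: eq_bigr => i _; apply: eq_bigr => j _;
  apply: eq_bigr => k _; apply: eq_bigr => l _; exact: H.
Qed.

Lemma S4_exch N M (F : nat -> nat -> nat -> nat -> nat -> nat -> nat -> nat -> CC) :
  S4 N (fun i j k l => S4 M (F i j k l)) =
  S4 M (fun a b e f => S4 N (fun i j k l => F i j k l a b e f)).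
Proof.
  rewrite S4P. under eq_bigr => r _ do rewrite S4P.
  rewrite exchange_big S4P /=. apply: eq_bigr => r _. by rewrite S4P.
Qed.

Lemma S4_sum_exch N K (F : nat -> nat -> nat -> nat -> 'I_K -> CC) :
  S4 N (fun i j k l => \sum_(m < K) F i j k l m) =
  \sum_(m < K) S4 N (fun i j k l => F i j k l m).
Proof.
  rewrite S4P exchange_big /=. apply: eq_bigr => m _. by rewrite S4P.
Qed.

Lemma S4_mulr N F (x : CC) : S4 N F * x = S4 N (fun i j k l => F i j k l * x).
Proof.
  rewrite /S4 mulr_suml; apply: eq_bigr => i _; rewrite mulr_suml; apply: eq_bigr => j _;
  rewrite mulr_suml; apply: eq_bigr => k _; rewrite mulr_suml; apply: eq_bigr => l _ //.
Qed.
Lemma S4_mull N F (x : CC) : x * S4 N F = S4 N (fun i j k l => x * F i j k l).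
Proof. by rewrite mulrC S4_mulr; apply: S4_ext => *; rewrite mulrC. Qed.

Definition mon (x : V4) (i j k l : nat) : CC :=
  (vX x ^+ i * vY x ^+ j) * (vZ x ^+ k * vW x ^+ l).

Lemma monomE x i j k l : monom x i j k l = mon x i j k l.
Proof. by rewrite /monom /mon !CmulE !CpowE. Qed.

Lemma ffactE i a : ffact i a = ('C(i, a) * a`!)%N.
Proof. rewrite bin_ffact. elim: a => [|a IH] /=. by rewrite ffactn0. by rewrite IH ffactnSr. Qed.

Definition hterm d (c : coefs) (a b e f : nat) (x : V4) i j k l : CC :=
  if Nat.eqb (i + j + k + l) d then
    c i j k l * ((ffact i a * ffact j b * ffact k e * ffact l f)%N%:R * mon x (i - a) (j - b) (k - e) (l - f))
  else 0.

Lemma hderivE d c a b e f x : hderiv d c a b e f x = S4 d.+1 (hterm d c a b e f x).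
Proof.
  rewrite /hderiv CsumE /S4; apply: eq_bigr => i _; rewrite CsumE; apply: eq_bigr => j _;
  rewrite CsumE; apply: eq_bigr => k _; rewrite CsumE; apply: eq_bigr => l _.
  by rewrite /hterm CmulE CmulE CofnatE monomE.
Qed.

Definition Eb d (c : coefs) (a b e f : nat) (x : V4) : CC :=
  S4 d.+1 (fun i j k l => if Nat.eqb (i + j + k + l) d then
    c i j k l * (('C(i, a) * 'C(j, b) * 'C(k, e) * 'C(l, f))%N%:R * mon x (i - a) (j - b) (k - e) (l - f))
  else 0).

Lemma hderiv_Eb d c a b e f x :
  hderiv d c a b e f x = (a`! * b`! * e`! * f`!)%N%:R * Eb d c a b e f x.
Proof.
  rewrite hderivE /Eb S4_mull; apply: S4_ext => i j k l _ _ _ _.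
  rewrite /hterm; case: (Nat.eqb _ _); last by rewrite mulr0.
  rewrite !ffactE !natrM. ring.
Qed.

Lemma natr_neq0 n : (0 < n)%N -> (n%:R : CC) != 0.
Proof.
  move=> Hn; apply/eqP; rewrite -CofnatE => H.
  have H1 : fst (Cofnat n) = fst (0 : CC) by rewrite H.
  have : Rlt 0 (INR n) by apply: lt_0_INR; apply/ltP.
  rewrite /= in H1. rewrite H1. lra.
Qed.

Lemma fact_neq0 a b e f : ((a`! * b`! * e`! * f`!)%N%:R : CC) != 0.
Proof. apply: natr_neq0. by rewrite !muln_gt0 !fact_gt0. Qed.

Lemma binom_ext (x y : CC) i N : (i < N)%N ->
  (x + y) ^+ i = \sum_(a < N) x ^+ (i - a) * y ^+ a *+ 'C(i, a).
Proof.
  move=> H. rewrite exprDn (big_ord_widen _ (fun a => x ^+ (i - a) * y ^+ a *+ 'C(i, a)) H) big_mkcond.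
  apply: eq_bigr => a _. case: ifP => // /negbT; rewrite -leqNgt => Ha.
  by rewrite bin_small ?mulr0n.
Qed.

Lemma prod2 N (A B : 'I_N -> CC) :
  (\sum_(a < N) A a) * (\sum_(b < N) B b) = \sum_(a < N) \sum_(b < N) A a * B b.
Proof. rewrite mulr_suml; apply: eq_bigr => a _; by rewrite mulr_sumr. Qed.

Lemma natmulE (x : CC) n : x *+ n = x * n%:R.
Proof. by rewrite mulr_natr. Qed.

Lemma rearr8 (p1 q1 p2 q2 p3 q3 p4 q4 c1 c2 c3 c4 : CC) :
  (p1 * q1 * c1) * (p2 * q2 * c2) * ((p3 * q3 * c3) * (p4 * q4 * c4)) =
  c1 * c2 * c3 * c4 * ((p1 * p2) * (p3 * p4)) * ((q1 * q2) * (q3 * q4)).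
Proof. ring. Qed.

Lemma mon_add w v i j k l N : (i < N)%N -> (j < N)%N -> (k < N)%N -> (l < N)%N ->
  mon (vadd w v) i j k l = S4 N (fun a b e f =>
    ('C(i, a) * 'C(j, b) * 'C(k, e) * 'C(l, f))%N%:R * mon w (i - a) (j - b) (k - e) (l - f) * mon v a b e f).
Proof.
  move=> Hi Hj Hk Hl. rewrite /mon !vE (binom_ext _ _ Hi) (binom_ext _ _ Hj) (binom_ext _ _ Hk)
    (binom_ext _ _ Hl) [X in X * _]prod2 [X in _ * X]prod2 mulr_suml /S4. apply: eq_bigr => a _.
  rewrite mulr_suml; apply: eq_bigr => b _. rewrite mulr_sumr; apply: eq_bigr => e _.
  rewrite mulr_sumr; apply: eq_bigr => f _ /=.
  rewrite (natmulE _ 'C(i, a)) (natmulE _ 'C(j, b)) (natmulE _ 'C(k, e)) (natmulE _ 'C(l, f)).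
  by rewrite !natrM rearr8.
Qed.

Lemma taylor d c w v :
  hderiv d c 0 0 0 0 (vadd w v) = S4 d.+1 (fun a b e f => Eb d c a b e f w * mon v a b e f).
Proof.
  rewrite hderivE.
  transitivity (S4 d.+1 (fun i j k l => S4 d.+1 (fun a b e f =>
    if Nat.eqb (i + j + k + l) d then
      c i j k l * (('C(i, a) * 'C(j, b) * 'C(k, e) * 'C(l, f))%N%:R * mon w (i - a) (j - b) (k - e) (l - f) * mon v a b e f)
    else 0))).
    apply: S4_ext => i j k l Hi Hj Hk Hl. rewrite /hterm.
    case: (Nat.eqb _ _); last by rewrite /S4 big1 // => *; rewrite big1 // => *; rewrite big1 // => *;
      rewrite big1.
    have -> : (ffact i 0 * ffact j 0 * ffact k 0 * ffact l 0)%N = 1%N by [].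
    rewrite !subn0 (mon_add _ _ Hi Hj Hk Hl) mul1r S4_mull //.
  rewrite S4_exch. apply: S4_ext => a b e f _ _ _ _. rewrite /Eb S4_mulr.
  apply: S4_ext => i j k l _ _ _ _. case: (Nat.eqb _ _); last by rewrite mul0r.
  by rewrite !mulrA.
Qed.

Lemma rearrS (p1 q1 p2 q2 p3 q3 p4 q4 : CC) :
  (p1 * q1) * (p2 * q2) * ((p3 * q3) * (p4 * q4)) = p1 * p2 * p3 * p4 * ((q1 * q2) * (q3 * q4)).
Proof. ring. Qed.

Lemma mon_scale (mu : CC) x a b e f :
  mon (vscale mu x) a b e f = mu ^+ (a + b + e + f) * mon x a b e f.
Proof. by rewrite /mon !vE !exprMn !exprD rearrS. Qed.

Definition T d (c : coefs) (m : nat) (w x : V4) : CC :=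
  S4 d.+1 (fun a b e f => if (a + b + e + f == m)%N then Eb d c a b e f w * mon x a b e f else 0).

Lemma sum_pick K n (G : nat -> CC) : (n < K)%N ->
  \sum_(m < K) (if n == m then G m else 0) = G n.
Proof.
  move=> H. rewrite -big_mkcond (eq_bigl (fun m : 'I_K => m == Ordinal H)).
    by rewrite big_pred1_eq.
  move=> m /=. by rewrite -(inj_eq val_inj) /= eq_sym.
Qed.

Lemma taylor_dir d c w x (mu : CC) :
  hderiv d c 0 0 0 0 (vadd w (vscale mu x)) = \sum_(m < (4 * d).+1) T d c m w x * mu ^+ m.
Proof.
  rewrite taylor.
  transitivity (S4 d.+1 (fun a b e f => \sum_(m < (4 * d).+1)
     (if (a + b + e + f == m)%N then Eb d c a b e f w * mon x a b e f * mu ^+ m else 0))).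
    apply: S4_ext => a b e f Ha Hb He Hf.
    rewrite (sum_pick (fun m => Eb d c a b e f w * mon x a b e f * mu ^+ m)).
      by rewrite mon_scale -mulrA (mulrC (mu ^+ _)).
    rewrite ltnS. rewrite -ltnS in Ha Hb He Hf. lia.
  rewrite S4_sum_exch. apply: eq_bigr => m _. rewrite /T S4_mulr.
  apply: S4_ext => a b e f _ _ _ _. by case: (_ == _); rewrite ?mul0r.
Qed.

Lemma S4_zero N F : (forall i j k l, (i < N)%N -> (j < N)%N -> (k < N)%N -> (l < N)%N -> F i j k l = 0) ->
  S4 N F = 0.
Proof.
  move=> H. rewrite (S4_ext (G := fun _ _ _ _ => 0)) // /S4.
  by rewrite big1 // => i _; rewrite big1 // => j _; rewrite big1 // => k _; rewrite big1.
Qed.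

Lemma mult_T d c N w : mult_ge d c N w -> forall m x, (m < N)%N -> T d c m w x = 0.
Proof.
  move=> H m x Hm. apply: S4_zero => a b e f _ _ _ _.
  case: eqP => [Habef|_] //.
  have : hderiv d c a b e f w = 0 by apply: H; apply/ltP; move: Hm; rewrite -Habef.
  rewrite hderiv_Eb => /eqP; rewrite mulf_eq0 (negbTE (fact_neq0 _ _ _ _)) /= => /eqP ->.
  by rewrite mul0r.
Qed.

Lemma Ccv_S4 N (F : nat -> nat -> nat -> nat -> nat -> CC) L :
  (forall i j k l, Ccv (fun n => F n i j k l) (L i j k l)) -> Ccv (fun n => S4 N (F n)) (S4 N L).
Proof.
  move=> H. rewrite /S4. apply: Ccv_sum => i; apply: Ccv_sum => j; apply: Ccv_sum => k;
  apply: Ccv_sum => l. exact: H.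
Qed.

Lemma Ccv_mon xs x a b e f : Vcv xs x -> Ccv (fun n => mon (xs n) a b e f) (mon x a b e f).
Proof.
  case=> H1 H2 H3 H4. rewrite /mon.
  apply: Ccv_mulR; apply: Ccv_mulR; exact: Ccv_exp.
Qed.

Lemma Ccv_Eb d cs c ws w a b e f : (forall i j k l, Ccv (fun n => cs n i j k l) (c i j k l)) ->
  Vcv ws w -> Ccv (fun n => Eb d (cs n) a b e f (ws n)) (Eb d c a b e f w).
Proof.
  move=> Hc Hw. apply: Ccv_S4 => i j k l. apply: Ccv_if; last exact: Ccv_cst.
  apply: Ccv_mulR => //. apply: Ccv_mulR; [exact: Ccv_cst | exact: Ccv_mon].
Qed.

Lemma Ccv_T d cs c m ws w xs x : (forall i j k l, Ccv (fun n => cs n i j k l) (c i j k l)) ->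
  Vcv ws w -> Vcv xs x -> Ccv (fun n => T d (cs n) m (ws n) (xs n)) (T d c m w x).
Proof.
  move=> Hc Hw Hx. apply: Ccv_S4 => a b e f. apply: Ccv_if; last exact: Ccv_cst.
  apply: Ccv_mulR; [exact: Ccv_Eb | exact: Ccv_mon].
Qed.

Lemma Ccv_hderiv d cs c xs x a b e f : (forall i j k l, Ccv (fun n => cs n i j k l) (c i j k l)) ->
  Vcv xs x -> Ccv (fun n => hderiv d (cs n) a b e f (xs n)) (hderiv d c a b e f x).
Proof.
  move=> Hc Hx. rewrite hderiv_Eb.
  apply: (Ccv_ev _ (fun n => (a`! * b`! * e`! * f`!)%N%:R * Eb d (cs n) a b e f (xs n)) _ 0).
    by move=> n _; rewrite hderiv_Eb.
  apply: Ccv_mulR; [exact: Ccv_cst | exact: Ccv_Eb].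
Qed.

Lemma Ccv_tseq : Ccv (tseq 1) 0.
Proof. exact: tt_cv. Qed.
Lemma tseq_neq0 k : tseq 1 k != 0.
Proof. apply/eqP; apply: tt_neq0. exact: Rlt_0_1. Qed.

Lemma Ccv_poly N (c : nat -> CC) lams lam : Ccv lams lam ->
  Ccv (fun j => \sum_(i < N) c i * lams j ^+ i) (\sum_(i < N) c i * lam ^+ i).
Proof.
  move=> H. apply: Ccv_sum => i. apply: Ccv_mulR; [exact: Ccv_cst | exact: Ccv_exp].
Qed.

Lemma poly_id0 N (c : nat -> CC) : (forall lam : CC, \sum_(i < N) c i * lam ^+ i = 0) ->
  forall i, (i < N)%N -> c i = 0.
Proof.
  elim: N c => [|N IH] c H i Hi //.
  have H0 : c 0%N = 0.
    have := H 0; rewrite big_ord_recl expr0 mulr1 big1 ?addr0 // => j _.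
    by rewrite lift0 expr0n /= mulr0.
  set Q := fun lam : CC => \sum_(i < N) c i.+1 * lam ^+ i.
  have HQ : forall lam, lam * Q lam = 0.
    move=> lam; rewrite -[RHS](H lam) big_ord_recl H0 mul0r add0r /Q mulr_sumr.
    apply: eq_bigr => j _. by rewrite lift0 exprS mulrCA.
  have HQ' : forall lam, lam != 0 -> Q lam = 0.
    move=> lam Hl; have /eqP := HQ lam; rewrite mulf_eq0 (negbTE Hl) /= => /eqP //.
  have HQ0 : Q 0 = 0.
    have Hcv := Ccv_poly N (fun i => c i.+1) Ccv_tseq.
    apply: (Ccv_unique _ _ _ Hcv). apply: (Ccv_ev _ (fun _ => 0) _ 0); last exact: Ccv_cst.
    move=> k _. exact: HQ' (tseq_neq0 k).
  have HQall : forall lam, Q lam = 0.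
    move=> lam; have [->|Hl] := eqVneq lam 0; [exact: HQ0 | exact: HQ'].
  case: i Hi => [|i] Hi //. exact: (IH (fun i => c i.+1)).
Qed.

Lemma rearr_peel (g x1 p x2 : CC) : g * ((x1 * x2) * p) = g * (x2 * p) * x1.
Proof. ring. Qed.
Lemma rearr_peel2 (g x2 x3 x4 : CC) : g * (x2 * (x3 * x4)) = g * (x3 * x4) * x2.
Proof. ring. Qed.
Lemma rearr_peel3 (g x3 x4 : CC) : g * (x3 * x4) = g * x4 * x3.
Proof. ring. Qed.

Lemma S4_id0 N (g : nat -> nat -> nat -> nat -> CC) :
  (forall x1 x2 x3 x4 : CC, S4 N (fun a b e f => g a b e f * ((x1 ^+ a * x2 ^+ b) * (x3 ^+ e * x4 ^+ f))) = 0) ->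
  forall a b e f, (a < N)%N -> (b < N)%N -> (e < N)%N -> (f < N)%N -> g a b e f = 0.
Proof.
  move=> H a b e f Ha Hb He Hf.
  have H1 : forall x2 x3 x4 : CC,
      \sum_(b < N) \sum_(e < N) \sum_(f < N) g a b e f * (x2 ^+ b * (x3 ^+ e * x4 ^+ f)) = 0.
    move=> x2 x3 x4.
    refine (@poly_id0 N (fun a => \sum_(b < N) \sum_(e < N) \sum_(f < N) g a b e f * (x2 ^+ b * (x3 ^+ e * x4 ^+ f))) _ _ Ha).
    move=> x1. rewrite -[RHS](H x1 x2 x3 x4) /S4. apply: eq_bigr => a' _.
    rewrite mulr_suml; apply: eq_bigr => b' _. rewrite mulr_suml; apply: eq_bigr => e' _.
    rewrite mulr_suml; apply: eq_bigr => f' _. by rewrite rearr_peel.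
  have H2 : forall x3 x4 : CC, \sum_(e < N) \sum_(f < N) g a b e f * (x3 ^+ e * x4 ^+ f) = 0.
    move=> x3 x4.
    refine (@poly_id0 N (fun b => \sum_(e < N) \sum_(f < N) g a b e f * (x3 ^+ e * x4 ^+ f)) _ _ Hb).
    move=> x2. rewrite -[RHS](H1 x2 x3 x4). apply: eq_bigr => b' _.
    rewrite mulr_suml; apply: eq_bigr => e' _.
    rewrite mulr_suml; apply: eq_bigr => f' _. by rewrite rearr_peel2.
  have H3 : forall x4 : CC, \sum_(f < N) g a b e f * x4 ^+ f = 0.
    move=> x4.
    refine (@poly_id0 N (fun e => \sum_(f < N) g a b e f * x4 ^+ f) _ _ He).
    move=> x3. rewrite -[RHS](H2 x3 x4). apply: eq_bigr => e' _.
    rewrite mulr_suml; apply: eq_bigr => f' _. by rewrite rearr_peel3.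
  exact: (@poly_id0 N (fun f => g a b e f) H3 _ Hf).
Qed.

Lemma Eb_big d c a b e f w : (d < a)%N \/ (d < b)%N \/ (d < e)%N \/ (d < f)%N -> Eb d c a b e f w = 0.
Proof.
  move=> H. apply: S4_zero => i j k l Hi Hj Hk Hl. case: (Nat.eqb _ _) => //.
  move: Hi Hj Hk Hl; rewrite !ltnS => Hi Hj Hk Hl.
  have -> : ('C(i, a) * 'C(j, b) * 'C(k, e) * 'C(l, f))%N = 0%N.
    case: H => [H|[H|[H|H]]].
    - rewrite (@bin_small i a); first by rewrite ?muln0 ?mul0n. exact: (leq_ltn_trans Hi H).
    - rewrite (@bin_small j b); first by rewrite ?muln0 ?mul0n. exact: (leq_ltn_trans Hj H).
    - rewrite (@bin_small k e); first by rewrite ?muln0 ?mul0n. exact: (leq_ltn_trans Hk H).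
    - rewrite (@bin_small l f); first by rewrite ?muln0 ?mul0n. exact: (leq_ltn_trans Hl H).
  by rewrite mul0r mulr0.
Qed.

Lemma T_all0 d c N p : (forall x m, (m < N)%N -> T d c m p x = 0) -> mult_ge d c N p.
Proof.
  move=> H a b e f Hlt. apply/eqP. rewrite hderiv_Eb mulf_eq0; apply/orP; right; apply/eqP.
  have [Hs|Hs] := boolP [&& (a < d.+1)%N, (b < d.+1)%N, (e < d.+1)%N & (f < d.+1)%N].
    case/and4P: Hs => Ha Hb He Hf.
    set g := fun a' b' e' f' => if (a' + b' + e' + f' == a + b + e + f)%N then Eb d c a' b' e' f' p else 0.
    have Hg : forall x1 x2 x3 x4 : CC,
        S4 d.+1 (fun a' b' e' f' => g a' b' e' f' * ((x1 ^+ a' * x2 ^+ b') * (x3 ^+ e' * x4 ^+ f'))) = 0.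
      move=> x1 x2 x3 x4. have := H (mkV4 x1 x2 x3 x4) (a + b + e + f)%N.
      move=> /(_ (introT ltP Hlt)) <-. apply: S4_ext => a' b' e' f' _ _ _ _.
      by rewrite /g; case: (_ == _); rewrite ?mul0r.
    have := @S4_id0 d.+1 g Hg a b e f Ha Hb He Hf. by rewrite /g eqxx.
  apply: Eb_big. move: Hs. rewrite !ltnS. case: (leqP a d) => //= _; [|by left].
  case: (leqP b d) => //= _; [|by right; left].
  case: (leqP e d) => //= _; [|by right; right; left].
  case: (leqP f d) => //= _; by right; right; right.
Qed.

Definition Sx (e : nat -> CC) (K : nat) (tau : CC) (i : nat) : CC :=
  \sum_(k < K) e k * tau ^+ (k - i) *+ 'C(k, i).

Lemma shift_poly (e : nat -> CC) K (tau nu : CC) :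
  \sum_(k < K) e k * (tau + nu) ^+ k = \sum_(i < K) Sx e K tau i * nu ^+ i.
Proof.
  under eq_bigr => k _ do rewrite (binom_ext tau nu (ltn_ord k)) mulr_sumr.
  rewrite exchange_big /=. apply: eq_bigr => i _. rewrite /Sx mulr_suml.
  apply: eq_bigr => k _. by rewrite mulrnAr mulrnAl mulrA.
Qed.

Lemma Sx_ext e1 e2 K tau i : (forall k, e1 k = e2 k) -> Sx e1 K tau i = Sx e2 K tau i.
Proof. move=> H; rewrite /Sx; apply: eq_bigr => k _; by rewrite H. Qed.

Lemma Sx_S e K tau i : e K = 0 -> Sx e K.+1 tau i = Sx e K tau i.
Proof. move=> H; by rewrite /Sx big_ord_recr /= H mul0r mul0rn addr0. Qed.

Lemma Sx_rel0 e K tau : e 0%N = 0 -> (forall k, (K <= k)%N -> e k = 0) ->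
  Sx e K tau 0 = tau * Sx (fun k => e k.+1) K tau 0.
Proof.
  move=> H0 Hs. rewrite -Sx_S; last exact: Hs.
  rewrite /Sx big_ord_recl H0 mul0r mul0rn add0r mulr_sumr. apply: eq_bigr => k _.
  by rewrite lift0 !subn0 !bin0 !mulr1n exprS mulrCA.
Qed.

Lemma Sx_relS e K tau i : e 0%N = 0 -> (forall k, (K <= k)%N -> e k = 0) ->
  Sx e K tau i.+1 = tau * Sx (fun k => e k.+1) K tau i.+1 + Sx (fun k => e k.+1) K tau i.
Proof.
  move=> H0 Hs. rewrite -Sx_S; last exact: Hs.
  rewrite /Sx big_ord_recl H0 mul0r mul0rn add0r mulr_sumr -big_split. apply: eq_bigr => k _.
  rewrite lift0 binS subSS mulrnDr. congr (_ + _).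
  case: (ltnP i k) => Hik.
    rewrite -(subnSK Hik) exprS. by rewrite mulrnAr mulrCA.
  by rewrite bin_small ?mulr0n ?mulr0 // ltnS.
Qed.

Lemma S_div1 e K tau n : tau != 0 -> e 0%N = 0 -> (forall k, (K <= k)%N -> e k = 0) ->
  (forall i, (i < n)%N -> Sx e K tau i = 0) ->
  forall i, (i < n)%N -> Sx (fun k => e k.+1) K tau i = 0.
Proof.
  move=> Ht H0 Hs H. elim=> [|i IH] Hi.
    have := H 0%N Hi. rewrite Sx_rel0 // => /eqP. rewrite mulf_eq0 (negbTE Ht) /=. by move/eqP.
  have := H i.+1 Hi. rewrite Sx_relS // IH; last exact: ltnW.
  rewrite addr0 => /eqP. rewrite mulf_eq0 (negbTE Ht) /=. by move/eqP.
Qed.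

Lemma S_divm m e K tau n : tau != 0 -> (forall k, (k < m)%N -> e k = 0) ->
  (forall k, (K <= k)%N -> e k = 0) ->
  (forall i, (i < n)%N -> Sx e K tau i = 0) ->
  forall i, (i < n)%N -> Sx (fun k => e (k + m)%N) K tau i = 0.
Proof.
  elim: m e => [|m IH] e Ht Hm Hs H i Hi.
    rewrite (Sx_ext (e2 := e)) ?H // => k; by rewrite addn0.
  rewrite (Sx_ext (e2 := fun k => (fun k' => e k'.+1) (k + m)%N)); last by move=> k; rewrite addnS.
  apply: (IH (fun k' => e k'.+1)) => //.
  - move=> k Hk; apply: Hm; by rewrite ltnS.
  - move=> k Hk; apply: Hs; exact: leqW.
  - apply: S_div1 => //. exact: Hm.
Qed.

Lemma Sx_at0 e K i : (i < K)%N -> Sx e K 0 i = e i.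
Proof.
  move=> H. rewrite /Sx (bigD1 (Ordinal H)) //= subnn expr0 mulr1 binn mulr1n big1 ?addr0 //.
  move=> k Hk. have Hk' : (nat_of_ord k != i).
    apply/eqP => E; move/eqP: Hk; apply; exact: val_inj.
  case: (ltngtP k i) => Hki.
  - by rewrite bin_small ?mulr0n.
  - rewrite expr0n. have -> : (k - i == 0)%N = false by rewrite subn_eq0 leqNgt Hki.
    by rewrite mulr0 mul0rn.
  - by rewrite Hki eqxx in Hk'.
Qed.

Lemma Ccv_Sx K (es : nat -> nat -> CC) einf taus tau i :
  (forall k, Ccv (fun j => es j k) (einf k)) -> Ccv taus tau ->
  Ccv (fun j => Sx (es j) K (taus j) i) (Sx einf K tau i).
Proof.
  move=> He Ht. apply: Ccv_sum => k. apply: Ccv_natmul. apply: Ccv_mulR => //. exact: Ccv_exp.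
Qed.

Lemma Ccv_ev0 (u : nat -> CC) l N : Ccv u l -> (forall j, le N j -> u j = 0) -> l = 0.
Proof.
  move=> H1 H2. apply: (Ccv_unique _ _ _ H1). apply: (Ccv_ev _ (fun _ => 0) _ N) => //. exact: Ccv_cst.
Qed.

Lemma collide K m n (es : nat -> nat -> CC) einf (taus : nat -> CC) :
  (forall k, Ccv (fun j => es j k) (einf k)) -> Ccv taus 0 ->
  (forall j k, (K <= k)%N -> es j k = 0) ->
  (exists N, forall j, le N j -> [/\ taus j != 0, (forall k, (k < m)%N -> es j k = 0) &
      (forall i, (i < n)%N -> Sx (es j) K (taus j) i = 0)]) ->
  forall k, (k < m + n)%N -> einf k = 0.
Proof.
  move=> He Ht Hs [N HN] k Hk.
  case: (ltnP k m) => Hkm.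
    apply: (Ccv_ev0 (He k) (N := N)) => j Hj. by case: (HN j Hj) => _ -> .
  case: (ltnP k K) => HkK; last first.
    apply: (Ccv_ev0 (He k) (N := 0)) => j _. exact: Hs.
  have Hi : (k - m < n)%N by rewrite ltn_subLR.
  have HiK : (k - m < K)%N by apply: leq_ltn_trans (leq_subr _ _) HkK.
  have Hcv := @Ccv_Sx K (fun j k' => es j (k' + m)%N) (fun k' => einf (k' + m)%N) taus 0 (k - m)
    (fun k' => He (k' + m)%N) Ht.
  have := Ccv_ev0 Hcv (N := N). rewrite Sx_at0 // subnK //. apply => j Hj.
  case: (HN j Hj) => Htj Hm Hn. exact: (S_divm Htj Hm (fun k' => Hs j k') Hn Hi).
Qed.

Ltac cvauto := repeat first [ apply: Ccv_addR | apply: Ccv_oppR | apply: Ccv_mulR | assumption | apply: Ccv_cst ].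

Lemma Ccv_det4 us vs ws zs u v w z : Vcv us u -> Vcv vs v -> Vcv ws w -> Vcv zs z ->
  Ccv (fun n => det4 (us n) (vs n) (ws n) (zs n)) (det4 u v w z).
Proof.
  case=> ????; case=> ????; case=> ????; case=> ????. rewrite /det4 /det3. cvauto.
Qed.

Lemma det4_lin1 x e v w z s : det4 (vadd x (vscale s e)) v w z = det4 x v w z + s * det4 e v w z.
Proof. rewrite /det4 /det3 !vE. ring. Qed.
Lemma det4_lin2 u x e w z s : det4 u (vadd x (vscale s e)) w z = det4 u x w z + s * det4 u e w z.
Proof. rewrite /det4 /det3 !vE. ring. Qed.
Lemma det4_comb1 x y v w z s r : det4 (vadd (vscale s x) (vscale r y)) v w z = s * det4 x v w z + r * det4 y v w z.
Proof. rewrite /det4 /det3 !vE. ring. Qed.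
Lemma det4_comb2 u x y w z s r : det4 u (vadd (vscale s x) (vscale r y)) w z = s * det4 u x w z + r * det4 u y w z.
Proof. rewrite /det4 /det3 !vE. ring. Qed.
Lemma det4_r13 u v z : det4 u v u z = 0. Proof. rewrite /det4 /det3. ring. Qed.
Lemma det4_r14 u v w : det4 u v w u = 0. Proof. rewrite /det4 /det3. ring. Qed.
Lemma det4_r23 u v z : det4 u v v z = 0. Proof. rewrite /det4 /det3. ring. Qed.
Lemma det4_r24 u v w : det4 u v w v = 0. Proof. rewrite /det4 /det3. ring. Qed.
Lemma det4_r12 u w z : det4 u u w z = 0. Proof. rewrite /det4 /det3. ring. Qed.

Definition E1 := mkV4 1 0 0 0.
Definition E2 := mkV4 0 1 0 0.
Definition E3 := mkV4 0 0 1 0.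
Definition E4 := mkV4 0 0 0 1.
Lemma det4_E123 b : det4 E1 E2 E3 b = vW b. Proof. rewrite /det4 /det3 /=. ring. Qed.
Lemma det4_E124 b : det4 E1 E2 E4 b = - vZ b. Proof. rewrite /det4 /det3 /=. ring. Qed.
Lemma det4_E134 b : det4 E1 E3 E4 b = vY b. Proof. rewrite /det4 /det3 /=. ring. Qed.
Lemma det4_E234 b : det4 E2 E3 E4 b = - vX b. Proof. rewrite /det4 /det3 /=. ring. Qed.

Lemma vscale0 x : vscale 0 x = vzero. Proof. vext; by rewrite mul0r. Qed.
Lemma vadd0 x : vadd x vzero = x. Proof. vext; by rewrite addr0. Qed.
Lemma vscale_eq0 s x : s != 0 -> vscale s x = vzero -> x = vzero.
Proof.
  move=> Hs H. have HX := congr1 vX H; have HY := congr1 vY H; have HZ := congr1 vZ H;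
  have HW := congr1 vW H. rewrite !vE in HX HY HZ HW.
  vext; apply/eqP.
  - by move/eqP: HX; rewrite mulf_eq0 (negbTE Hs).
  - by move/eqP: HY; rewrite mulf_eq0 (negbTE Hs).
  - by move/eqP: HZ; rewrite mulf_eq0 (negbTE Hs).
  - by move/eqP: HW; rewrite mulf_eq0 (negbTE Hs).
Qed.

Lemma indep2_neq0l u v : indep2 u v -> u <> vzero.
Proof.
  move=> H Hu. have := H 1 0. rewrite Hu vscale0.
  have -> : vadd (vscale 1 vzero) vzero = vzero by vext; rewrite ?mulr0 ?addr0.
  move=> /(_ erefl) [H1 _]. have : (1 : CC) != 0 := oner_neq0 _. by rewrite H1 eqxx.
Qed.
Lemma indep2_neq0r u v : indep2 u v -> v <> vzero.
Proof.
  move=> H Hv. have := H 0 1. rewrite Hv vscale0.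
  have -> : vadd vzero (vscale 1 vzero) = vzero by vext; rewrite ?mulr0 ?addr0.
  move=> /(_ erefl) [_ H1]. have : (1 : CC) != 0 := oner_neq0 _. by rewrite H1 eqxx.
Qed.

Lemma cramer0 (e y z a b : V4) (g h : CC) :
  vscale 0 z = vadd (vadd (vscale 0 e) (vscale 0 y)) (vadd (vscale g a) (vscale h b)) ->
  vadd (vscale g a) (vscale h b) = vzero.
Proof.
  move=> H. have HX := congr1 vX H; have HY := congr1 vY H; have HZ := congr1 vZ H;
  have HW := congr1 vW H. rewrite !vE !mul0r !add0r in HX HY HZ HW.
  vext; by rewrite ?vE.
Qed.

Lemma minor_exists a b : indep2 a b -> exists e y, det4 e y a b <> 0.
Proof.
  move=> Hab. apply: NNPP => Hn.
  have H0 : forall e y, det4 e y a b = 0.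
    move=> e y; apply: NNPP => Hd; apply: Hn; by exists e, y.
  have H1 : forall e y z, det4 e y z b = 0.
    move=> e y z. have := cramer e y a b z. rewrite !H0 => /cramer0 /Hab [-> _] //.
  apply: (indep2_neq0r Hab). vext.
  - by rewrite -[LHS]opprK -det4_E234 H1 oppr0.
  - by rewrite -det4_E134 H1.
  - by rewrite -[LHS]opprK -det4_E124 H1 oppr0.
  - by rewrite -det4_E123 H1.
Qed.

Lemma D0_zero u1 u2 a0 b0 p : meet_at u1 u2 a0 b0 p -> det4 u1 u2 a0 b0 = 0.
Proof.
  case=> Hp0 [[s [r Hpl]] [[s' [r' Hpr]] _]].
  have E1 : s * det4 u1 u2 a0 b0 = 0.
    have -> : s * det4 u1 u2 a0 b0 = det4 p u2 a0 b0 by rewrite Hpl det4_comb1 det4_r12 mulr0 addr0.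
    by rewrite Hpr det4_comb1 det4_r13 det4_r14 !mulr0 addr0.
  have E2 : r * det4 u1 u2 a0 b0 = 0.
    have -> : r * det4 u1 u2 a0 b0 = det4 u1 p a0 b0 by rewrite Hpl det4_comb2 det4_r12 mulr0 add0r.
    by rewrite Hpr det4_comb2 det4_r23 det4_r24 !mulr0 addr0.
  apply/eqP; apply: contraT => HD. exfalso; apply: Hp0.
  move/eqP: E1; rewrite mulf_eq0 (negbTE HD) orbF => /eqP Es.
  move/eqP: E2; rewrite mulf_eq0 (negbTE HD) orbF => /eqP Er.
  rewrite Hpl Es Er !vscale0. by vext; rewrite addr0.
Qed.

Lemma solve_scalar (c g h u0 a0 b0 : CC) : c != 0 ->
  0 = c * u0 + (g * a0 + h * b0) -> u0 = (- g / c) * a0 + (- h / c) * b0.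
Proof.
  move=> Hc H.
  have E : u0 - ((- g / c) * a0 + (- h / c) * b0) = c^-1 * (c * u0 + (g * a0 + h * b0)).
    by field.
  apply/eqP. by rewrite -subr_eq0 E -H mulr0.
Qed.

Lemma solve_span1 (x u v a b : V4) (c g h : CC) : c != 0 ->
  vscale 0 x = vadd (vadd (vscale c u) (vscale 0 v)) (vadd (vscale g a) (vscale h b)) -> span2 a b u.
Proof.
  move=> Hc H. exists (- g / c), (- h / c).
  have HX := congr1 vX H; have HY := congr1 vY H; have HZ := congr1 vZ H;
  have HW := congr1 vW H. rewrite !vE !mul0r !addr0 in HX HY HZ HW.
  vext; apply: solve_scalar; eassumption.
Qed.
Lemma solve_span2 (x u v a b : V4) (c g h : CC) : c != 0 ->
  vscale 0 x = vadd (vadd (vscale 0 u) (vscale c v)) (vadd (vscale g a) (vscale h b)) -> span2 a b v.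
Proof.
  move=> Hc H. exists (- g / c), (- h / c).
  have HX := congr1 vX H; have HY := congr1 vY H; have HZ := congr1 vZ H;
  have HW := congr1 vW H. rewrite !vE !mul0r !add0r in HX HY HZ HW.
  vext; apply: solve_scalar; eassumption.
Qed.

Definition Qv (u1 u2 a b x : V4) : V4 :=
  vadd (vscale (det4 x u2 a b) u1) (vscale (det4 u1 x a b) u2).
Definition Zv (u1 u2 a b x : V4) : V4 :=
  vadd (vscale (det4 u1 u2 x b) a) (vscale (det4 u1 u2 a x) b).

Lemma cramerQZ u1 u2 a b x : vscale (det4 u1 u2 a b) x = vadd (Qv u1 u2 a b x) (Zv u1 u2 a b x).
Proof. exact: cramer. Qed.

Lemma Qv_lin u1 u2 a b x e s : Qv u1 u2 a b (vadd x (vscale s e)) = vadd (Qv u1 u2 a b x) (vscale s (Qv u1 u2 a b e)).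
Proof. rewrite /Qv det4_lin1 det4_lin2. vext; ring. Qed.

Lemma good_exists u1 u2 a0 b0 p : indep2 u1 u2 -> indep2 a0 b0 -> meet_at u1 u2 a0 b0 p ->
  exists e, Qv u1 u2 a0 b0 e <> vzero.
Proof.
  move=> Hl Hab Hp. apply: NNPP => Hn.
  have H0 : forall e, det4 e u2 a0 b0 = 0 /\ det4 u1 e a0 b0 = 0.
    move=> e. apply: Hl. apply: NNPP => Hd; apply: Hn; by exists e.
  have [e [y Hd]] := minor_exists Hab.
  have Hd' : det4 e y a0 b0 != 0 by apply/eqP.
  have S2 : span2 a0 b0 u2.
    have := cramer e u2 a0 b0 y. rewrite (proj1 (H0 e)) (proj1 (H0 y)). exact: solve_span2.
  have S1 : span2 a0 b0 u1.
    have := cramer u1 y a0 b0 e. rewrite (proj2 (H0 e)) (proj2 (H0 y)). exact: solve_span1.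
  case: Hp => Hp0 [_ [_ Hmeet]].
  have L1 : span2 u1 u2 u1 by exists 1, 0; vext; rewrite mul1r mul0r addr0.
  have L2 : span2 u1 u2 u2 by exists 0, 1; vext; rewrite mul1r mul0r add0r.
  have [s Hs] := Hmeet u1 L1 S1.
  have [s' Hs'] := Hmeet u2 L2 S2.
  have := Hl s' (- s). rewrite Hs Hs'. case.
    vext; ring.
  move=> Es' Es. apply: (indep2_neq0l Hl). rewrite Hs.
  have -> : s = 0 by rewrite -[s]opprK Es oppr0.
  exact: vscale0.
Qed.

Lemma T_big d c k w x : ((4 * d).+1 <= k)%N -> T d c k w x = 0.
Proof.
  move=> Hk. apply: S4_zero => a b e f Ha Hb He Hf. case: eqP => // E.
  exfalso. move: Ha Hb He Hf Hk. rewrite -E !ltnS. lia.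
Qed.

Lemma sx_eq d c w x tau i : (i < (4 * d).+1)%N ->
  Sx (fun k => T d c k w x) (4 * d).+1 tau i = T d c i (vadd w (vscale tau x)) x.
Proof.
  move=> Hi.
  have H : forall nu : CC, \sum_(j < (4 * d).+1)
      (Sx (fun k => T d c k w x) (4 * d).+1 tau j - T d c j (vadd w (vscale tau x)) x) * nu ^+ j = 0.
    move=> nu. under eq_bigr => j _ do rewrite mulrBl.
    rewrite sumrB -shift_poly -taylor_dir -taylor_dir.
    have -> : vadd w (vscale (tau + nu) x) = vadd (vadd w (vscale tau x)) (vscale nu x).
      vext; ring.
    by rewrite subrr.
  have E := @poly_id0 _ (fun j => Sx (fun k => T d c k w x) (4 * d).+1 tau j - T d c j (vadd w (vscale tau x)) x) H i Hi.
  by move/eqP: E; rewrite subr_eq0 => /eqP.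
Qed.

Lemma analytic_V4_cv rho a : Rlt 0 rho -> analytic_V4 rho a -> Vcv (fun n => a (tseq rho n)) (a C0).
Proof.
  move=> Hr [H1 [H2 [H3 H4]]]. split.
  - exact: (analytic_cv _ _ Hr H1).
  - exact: (analytic_cv _ _ Hr H2).
  - exact: (analytic_cv _ _ Hr H3).
  - exact: (analytic_cv _ _ Hr H4).
Qed.

Lemma vadd_eq0 q z : vadd q z = vzero -> q = vscale (-1) z.
Proof.
  move=> H. have HX := congr1 vX H; have HY := congr1 vY H; have HZ := congr1 vZ H;
  have HW := congr1 vW H. rewrite !vE in HX HY HZ HW.
  vext; rewrite mulN1r; apply/eqP; by rewrite -addr_eq0 ?HX ?HY ?HZ ?HW.
Qed.

Lemma main
  (rho : R) (Hrho : Rlt 0 rho)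
  (u1 u2 : V4) (Hl : indep2 u1 u2)
  (a b : CC -> V4) (Ha : analytic_V4 rho a) (Hb : analytic_V4 rho b)
  (Hr : forall t, Rlt (Cmod t) rho -> indep2 (a t) (b t))
  (Hskew : forall t, Rlt (Cmod t) rho -> t <> C0 -> indep4 u1 u2 (a t) (b t))
  (p : V4) (Hp : meet_at u1 u2 (a C0) (b C0) p)
  (m n : nat) (Hm : lt 0 m) (Hn : lt 0 n)
  (d : nat) (F : nat -> nat -> nat -> nat -> CC -> CC)
  (HFan : forall i j k l, analytic_on rho (F i j k l))
  (HFsurf : forall t, Rlt (Cmod t) rho -> is_nonzero_poly d (fun i j k l => F i j k l t))
  (HFmult : forall t, Rlt (Cmod t) rho -> t <> C0 ->
      mult_along d (fun i j k l => F i j k l t) m u1 u2 /\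
      mult_along d (fun i j k l => F i j k l t) n (a t) (b t)) :
  mult_along d (fun i j k l => F i j k l C0) m u1 u2 /\
  mult_along d (fun i j k l => F i j k l C0) n (a C0) (b C0) /\
  mult_ge d (fun i j k l => F i j k l C0) (Nat.add m n) p.
Proof.
  have Hcs : forall i j k l, Ccv (fun q => F i j k l (tseq rho q)) (F i j k l C0).
    move=> i j k l. exact: (analytic_cv _ _ Hrho (HFan i j k l)).
  have Hta : forall q, Rlt (Cmod (tseq rho q)) rho by move=> q; exact: tt_mod.
  have Htn : forall q, tseq rho q <> C0 by move=> q; exact: tt_neq0.
  have Va := analytic_V4_cv Hrho Ha.
  have Vb := analytic_V4_cv Hrho Hb.
  split; [|split].
  - move=> x Hx Hsp a' b' e' f' Hlt.
    apply: (Ccv_ev0 (@Ccv_hderiv d (fun q => fun i j k l => F i j k l (tseq rho q)) _ (fun _ => x) x a' b' e' f' Hcs (Vcv_cst x)) (N := 0)) => q _.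
    have [H1 _] := HFmult _ (Hta q) (Htn q). exact: H1 x Hx Hsp a' b' e' f' Hlt.
  - move=> x Hx [s [r Hxr]] a' b' e' f' Hlt.
    set xs := fun q => vadd (vscale s (a (tseq rho q))) (vscale r (b (tseq rho q))).
    have Vx : Vcv xs x.
      rewrite Hxr; apply: Vcv_add; apply: Vcv_scale => //; exact: Ccv_cst.
    have [N HN] := Vcv_neq0 Vx Hx.
    apply: (Ccv_ev0 (@Ccv_hderiv d (fun q => fun i j k l => F i j k l (tseq rho q)) _ xs x a' b' e' f' Hcs Vx) (N := N)) => q Hq.
    have [_ H2] := HFmult _ (Hta q) (Htn q). apply: H2 (HN q Hq) _ a' b' e' f' Hlt.
    by exists s, r.
  - set cs := fun q => fun i j k l => F i j k l (tseq rho q).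
    set c0 := fun i j k l => F i j k l C0.
    set a0 := a C0. set b0 := b C0.
    have Hmod0 : Rlt (Cmod C0) rho by rewrite Cmod_C0.
    have Hab0 : indep2 a0 b0 := Hr C0 Hmod0.
    have HD0 : det4 u1 u2 a0 b0 = 0 := D0_zero Hp.
    have Hp0 : p <> vzero by case: Hp.
    have good : forall x, Qv u1 u2 a0 b0 x <> vzero -> forall k, (k < m + n)%N -> T d c0 k p x = 0.
      move=> x HQ.
      set Q0 := Qv u1 u2 a0 b0 x.
      have HQZ : vadd Q0 (Zv u1 u2 a0 b0 x) = vzero by rewrite -cramerQZ HD0 vscale0.
      have Hspan0 : span2 a0 b0 Q0.
        exists (- det4 u1 u2 x b0), (- det4 u1 u2 a0 x). rewrite (vadd_eq0 HQZ) /Zv. vext; ring.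
      have Hspanl : span2 u1 u2 Q0 by exists (det4 x u2 a0 b0), (det4 u1 x a0 b0).
      have [c Hc] : exists c, Q0 = vscale c p by case: Hp => _ [_ [_ H]]; exact: H.
      have Hc0 : c != 0.
        apply/eqP => E; apply: HQ. rewrite -/Q0 Hc E. exact: vscale0.
      set tn := tseq rho.
      set Dn := fun q => det4 u1 u2 (a (tn q)) (b (tn q)).
      set Qn := fun q => Qv u1 u2 (a (tn q)) (b (tn q)) x.
      set Zn := fun q => Zv u1 u2 (a (tn q)) (b (tn q)) x.
      set ws := fun q => vscale c^-1 (Qn q).
      set taus := fun q => - (c^-1 * Dn q).
      have VQ : Vcv Qn Q0.
        apply: Vcv_add; apply: Vcv_scale; try exact: Vcv_cst;
        apply: Ccv_det4 => //; exact: Vcv_cst.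
      have Vw : Vcv ws p.
        have -> : p = vscale c^-1 Q0 by rewrite Hc; vext; rewrite mulrA mulVf ?mul1r.
        apply: Vcv_scale => //; exact: Ccv_cst.
      have CD : Ccv Dn 0.
        rewrite -HD0. apply: Ccv_det4 => //; exact: Vcv_cst.
      have Ct : Ccv taus 0.
        have -> : (0 : CC) = - (c^-1 * 0) by rewrite mulr0 oppr0.
        apply: Ccv_oppR; apply: Ccv_mulR => //; exact: Ccv_cst.
      have w'eq : forall q, vadd (ws q) (vscale (taus q) x) = vscale (- c^-1) (Zn q).
        move=> q. have HC := cramerQZ u1 u2 (a (tn q)) (b (tn q)) x.
        have HX := congr1 vX HC; have HY := congr1 vY HC; have HZ := congr1 vZ HC;
        have HW := congr1 vW HC. rewrite !vE in HX HY HZ HW.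
        rewrite /ws /taus /Dn /Qn /Zn; vext; rewrite !mulNr -!mulrA ?HX ?HY ?HZ ?HW; ring.
      have Vw' : Vcv (fun q => vadd (ws q) (vscale (taus q) x)) p.
        have -> : p = vadd p (vscale 0 x) by rewrite vscale0 vadd0.
        apply: Vcv_add => //. apply: Vcv_scale => //; exact: Vcv_cst.
      have [N1 HN1] := Vcv_neq0 Vw Hp0.
      have [N2 HN2] := Vcv_neq0 Vw' Hp0.
      apply: (@collide (4 * d).+1 m n (fun q k => T d (cs q) k (ws q) x) (fun k => T d c0 k p x) taus).
      + move=> k. apply: Ccv_T => //. exact: Vcv_cst.
      + exact: Ct.
      + move=> q k Hk. exact: T_big.
      + exists (Nat.max N1 N2) => q Hq.
        have Hq1 : le N1 q by lia.
        have Hq2 : le N2 q by lia.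
        have [Hl1 Hl2] := HFmult _ (Hta q) (Htn q).
        split.
        * apply/eqP => Et. apply: (HN1 q Hq1).
          have ED : Dn q = 0.
            move: Et; rewrite /taus => /eqP; rewrite oppr_eq0 mulf_eq0 invr_eq0 (negbTE Hc0) /= => /eqP //.
          have HC := cramerQZ u1 u2 (a (tn q)) (b (tn q)) x.
          rewrite -/(Dn q) ED vscale0 in HC.
          have [E1 [E2 _]] := Hskew _ (Hta q) (Htn q) _ _ _ _ (esym HC).
          rewrite /ws /Qn /Qv E1 E2 !vscale0. vext; by rewrite ?addr0 ?mulr0.
        * move=> k Hk. apply: mult_T (Hl1 _ (HN1 q Hq1) _) _ _ Hk.
          exists (c^-1 * det4 x u2 (a (tn q)) (b (tn q))), (c^-1 * det4 u1 x (a (tn q)) (b (tn q))).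
          rewrite /ws /Qn /Qv; vext; ring.
        * move=> i Hi. case: (ltnP i (4 * d).+1) => HiK; last first.
            rewrite /Sx big1 // => k _. rewrite bin_small ?mulr0n //.
            exact: leq_trans (ltn_ord k) HiK.
          rewrite sx_eq //. apply: mult_T Hi.
          apply: Hl2; first exact: (HN2 q Hq2).
          rewrite w'eq. exists (- c^-1 * det4 u1 u2 x (b (tn q))), (- c^-1 * det4 u1 u2 (a (tn q)) x).
          rewrite /Zn /Zv; vext; ring.
    have [e He] := good_exists Hl Hab0 Hp.
    apply: T_all0 => x k Hk.
    case: (classic (Qv u1 u2 a0 b0 x = vzero)) => HQ; last exact: good.
    set xs := fun q => vadd x (vscale (tseq 1 q) e).
    have Hgood : forall q, T d c0 k p (xs q) = 0.
      move=> q. apply: good => //. rewrite /xs Qv_lin HQ.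
      have -> : vadd vzero (vscale (tseq 1 q) (Qv u1 u2 a0 b0 e)) = vscale (tseq 1 q) (Qv u1 u2 a0 b0 e).
        by vext; rewrite add0r.
      move=> E. apply: He. apply: (vscale_eq0 _ E). exact: tseq_neq0.
    have Vx0 : Vcv xs (vadd x (vscale 0 e)).
      apply: Vcv_add; first exact: Vcv_cst. apply: Vcv_scale; [exact: Ccv_tseq | exact: Vcv_cst].
    have Vx : Vcv xs x by move: Vx0; rewrite vscale0 vadd0.
    apply: (Ccv_ev0 (@Ccv_T d (fun _ => c0) c0 k (fun _ => p) p xs x (fun i j k l => Ccv_cst _) (Vcv_cst p) Vx) (N := 0)).
    move=> q _. exact: Hgood.
Qed.

End Aux.

Unset Implicit Arguments.

Theorem lemma4p1
  (rho : R) (Hrho : 0 < rho)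
  (u1 u2 : V4) (Hl : indep2 u1 u2)
  (a b : CC -> V4) (Ha : analytic_V4 rho a) (Hb : analytic_V4 rho b)
  (Hr : forall t, Cmod t < rho -> indep2 (a t) (b t))
  (Hskew : forall t, Cmod t < rho -> t <> C0 -> indep4 u1 u2 (a t) (b t))
  (p : V4) (Hp : meet_at u1 u2 (a C0) (b C0) p)
  (m n : nat) (Hm : (0 < m)%nat) (Hn : (0 < n)%nat)
  (d : nat) (F : nat -> nat -> nat -> nat -> CC -> CC)
  (HFan : forall i j k l, analytic_on rho (F i j k l))
  (HFsurf : forall t, Cmod t < rho -> is_nonzero_poly d (fun i j k l => F i j k l t))
  (HFmult : forall t, Cmod t < rho -> t <> C0 ->
      mult_along d (fun i j k l => F i j k l t) m u1 u2 /\
      mult_along d (fun i j k l => F i j k l t) n (a t) (b t)) :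
  mult_along d (fun i j k l => F i j k l C0) m u1 u2 /\
  mult_along d (fun i j k l => F i j k l C0) n (a C0) (b C0) /\
  mult_ge d (fun i j k l => F i j k l C0) (m + n) p.
Proof.
  exact (@Aux.main rho Hrho u1 u2 Hl a b Ha Hb Hr Hskew p Hp m n Hm Hn d F HFan HFsurf HFmult).
Qed.
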